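(* Let $\mathcal{X}$ and $\mathcal{Y}$ be finite sets and let $p(X,Y)$ be a fully supported probability distribution on $\mathcal{X}\times\mathcal{Y}$ (i.e. $p(x,y)>0$ for all $(x,y)$), with conditional $p(Y|X)$ and marginals $p(X)$, $p(Y)$, and assume that $p(Y)(y)=\sum_x p(y|x)p(x)$ is the uniform distribution on $\mathcal{Y}$. Let $\kappa\in C(\mathcal{X}\times\mathcal{Y},\mathcal{T})$ be a solution of the Intertwining Information Bottleneck (IIB) problem with parameter $\lambda=I(X;Y)$. Then for any pair of bijections $\sigma:\mathcal{X}\to\mathcal{X}$, $\tau:\mathcal{Y}\to\mathcal{Y}$, the pair $(\sigma,\tau)$ is an equivariance of $p(Y|X)$ if and only if $$\kappa\circ(\sigma\otimes\tau)=\kappa,\quad\text{i.e. }\ \kappa(t\mid \sigma(x),\tau(y))=\kappa(t\mid x,y)\ \text{ for all } (x,y,t)\in\mathcal{X}\times\mathcal{Y}\times\mathcal{T}.$$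
   Context: $\mathcal{T}:=\mathbb{N}$. For finite or countable sets $\mathcal{A},\mathcal{B}$, $C(\mathcal{A},\mathcal{B})$ denotes the set of channels (conditional probabilities) $\kappa(b|a)$ from $\mathcal{A}$ to $\mathcal{B}$; deterministic maps are viewed as deterministic channels and $\circ$ is channel composition. For a distribution $r$ on $\mathcal{X}\times\mathcal{Y}$ and $\kappa\in C(\mathcal{X}\times\mathcal{Y},\mathcal{T})$, $\kappa(r)$ is the distribution $t\mapsto\sum_{x,y}\kappa(t|x,y)r(x,y)$. $I_\kappa(X,Y;T)$ is the mutual information between $(X,Y)$ and $T$ under the joint distribution $p(x,y)\kappa(t|x,y)$, $D(\cdot\|\cdot)$ is the Kullback–Leibler divergence, and $I(X;Y)=D(p(X,Y)\|p(X)p(Y))$. For $0\le\lambda\le I(X;Y)$, the IIB problem is: minimise $I_\kappa(X,Y;T)$ over $\kappa\in C(\mathcal{X}\times\mathcal{Y},\mathcal{T})$ subject to $D(\kappa(p(X,Y))\,\|\,\kappa(p(X)p(Y)))=\lambda$; a solution is a minimiser. An (exact) equivariance of $p(Y|X)$ is a pair of bijections $(\sigma,\tau)$ of $\mathcal{X}$ and $\mathcal{Y}$ with $p(Y|X)\circ\sigma=\tau\circ p(Y|X)$ as channels, i.e. $p(y\mid\sigma(x))=p(\tau^{-1}(y)\mid x)$ for all $x,y$. *)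

(* Defs.v *)
From HB Require Import structures.
From mathcomp Require Import all_boot all_order all_algebra all_fingroup.
From mathcomp Require Import all_classical all_reals all_analysis.
Set Implicit Arguments. Unset Strict Implicit. Unset Printing Implicit Defensive.
Import Order.TTheory GRing.Theory Num.Theory.
Local Open Scope ring_scope.

Section IIB.
Variables (R : realType) (X Y : finType).

(* a joint distribution is a function p : X -> Y -> R; T := nat *)
Definition pX (p : X -> Y -> R) (x : X) : R := \sum_(y : Y) p x y.
Definition pY (p : X -> Y -> R) (y : Y) : R := \sum_(x : X) p x y.
Definition pcond (p : X -> Y -> R) (x : X) (y : Y) : R := p x y / pX p x.
Definition prodmarg (p : X -> Y -> R) (x : X) (y : Y) : R := pX p x * pY p y.

Definition fully_supported_distr (p : X -> Y -> R) : Prop :=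
  (forall x y, 0 < p x y) /\ \sum_(x : X) \sum_(y : Y) p x y = 1.

Definition channel (k : X -> Y -> nat -> R) : Prop :=
  forall x y, (forall t, 0 <= k x y t) /\
              (\sum_(0 <= t <oo) (k x y t)%:E = 1)%E.

Definition push (k : X -> Y -> nat -> R) (r : X -> Y -> R) (t : nat) : R :=
  \sum_(x : X) \sum_(y : Y) k x y t * r x y.

(* Kullback-Leibler divergence of distributions on nat (convention 0 ln 0 = 0) *)
Definition KLnat (a b : nat -> R) : \bar R :=
  (\sum_(0 <= t <oo) (a t * ln (a t / b t))%:E)%E.

Definition mutinf (p : X -> Y -> R) : R :=
  \sum_(x : X) \sum_(y : Y) p x y * ln (p x y / prodmarg p x y).

Definition mutinf_k (p : X -> Y -> R) (k : X -> Y -> nat -> R) : \bar R :=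
  (\sum_(x : X) \sum_(y : Y) (p x y)%:E * KLnat (k x y) (push k p))%E.

Definition iib_div (p : X -> Y -> R) (k : X -> Y -> nat -> R) : \bar R :=
  KLnat (push k p) (push k (prodmarg p)).

Definition IIB_solution (p : X -> Y -> R) (lam : R) (k : X -> Y -> nat -> R) : Prop :=
  [/\ channel k, iib_div p k = lam%:E &
      forall k', channel k' -> iib_div p k' = lam%:E ->
                 (mutinf_k p k <= mutinf_k p k')%E].

Definition equivariance (p : X -> Y -> R) (s : {perm X}) (tau : {perm Y}) : Prop :=
  forall x y, pcond p (s x) y = pcond p x ((tau^-1)%g y).

End IIB.

(* Main.v *)
From HB Require Import structures.
From mathcomp Require Import all_boot all_order all_algebra all_fingroup.
From mathcomp Require Import all_classical all_reals all_analysis.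
From mathcomp Require Import ring lra.
Require Import Defs.
Set Implicit Arguments. Unset Strict Implicit. Unset Printing Implicit Defensive.
Import Order.TTheory GRing.Theory Num.Theory.
Import numFieldNormedType.Exports.
Local Open Scope ring_scope.

Section HS.
Variable R : realType.
Local Open Scope classical_set_scope.
Definition HS (f : nat -> R) (l : R) := series f @ \oo --> l.

Lemma HS_eseries f l : HS f l -> (\sum_(0 <= t <oo) (f t)%:E)%E = l%:E.
Proof.
move=> h.
have -> : (fun n => (\sum_(0 <= t < n) (f t)%:E)%E) = EFin \o series f.
  by apply/funext => n /=; rewrite sumEFin.
rewrite EFin_lim; last by apply/cvg_ex; exists l.
by rewrite (cvg_lim (@Rhausdorff R) h).
Qed.

Lemma HS_unique f l m : HS f l -> HS f m -> l = m.
Proof. by move=> h1 h2; exact: (cvg_unique (@Rhausdorff R) h1 h2). Qed.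

Lemma HS_ext f g l : (forall t, f t = g t) -> HS f l -> HS g l.
Proof. by move=> e; have -> : f = g by apply/funext. Qed.

Lemma HS_add f g l m : HS f l -> HS g m -> HS (fun t => f t + g t) (l + m).
Proof.
move=> h1 h2; rewrite /HS (_ : series _ = series f + series g).
  exact: cvgD.
by rewrite -seriesD.
Qed.

Lemma HS_scale f l (c : R) : HS f l -> HS (fun t => c * f t) (c * l).
Proof.
move=> h; rewrite /HS (_ : series _ = fun n => c * series f n).
  exact: cvgMr.
by apply/funext => n; rewrite /series /= big_distrr.
Qed.

Lemma HS_opp f l : HS f l -> HS (fun t => - f t) (- l).
Proof.
move=> h; have := @HS_scale f l (-1) h; rewrite mulN1r.
by apply: HS_ext => t; rewrite mulN1r.
Qed.

Lemma HS_sub f g l m : HS f l -> HS g m -> HS (fun t => f t - g t) (l - m).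
Proof. by move=> h1 h2; apply: HS_add => //; apply: HS_opp. Qed.

Lemma HS_big (I : finType) (F : I -> nat -> R) (L : I -> R) :
  (forall i, HS (F i) (L i)) -> HS (fun t => \sum_i F i t) (\sum_i L i).
Proof.
move=> h; rewrite /HS (_ : series _ = fun n => \sum_i series (F i) n).
  apply: cvg_big.
  - exact: add_continuous.
  - by move=> i _; apply: h.
by apply/funext => n; rewrite /series /= exchange_big.
Qed.

Lemma HS_cst0 : HS (fun _ => 0) 0.
Proof.
rewrite /HS (_ : series _ = fun _ => 0); first exact: cvg_cst.
by apply/funext => n; rewrite /series /= big1.
Qed.

Lemma HS_le f g l m : HS f l -> HS g m -> (forall t, f t <= g t) -> l <= m.
Proof.
move=> h1 h2 fg.
have := @lim_series_le R f g (ltac:(apply/cvg_ex; exists l; exact h1))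
  (ltac:(apply/cvg_ex; exists m; exact h2)) fg.
by rewrite (cvg_lim (@Rhausdorff R) h1) ?(cvg_lim (@Rhausdorff R) h2).  
Qed.

Lemma HS_ge0_eq0 f : (forall t, 0 <= f t) -> HS f 0 -> forall t, f t = 0.
Proof.
move=> f0 h t; apply/eqP; rewrite eq_le f0 andbT.
have nd : nondecreasing_seq (series f).
  by apply/nondecreasing_seqP => n; rewrite /series /= big_nat_recr //= lerDl.
have := nondecreasing_cvgn_le nd (ltac:(apply/cvg_ex; exists 0; exact h)) t.+1.
rewrite (cvg_lim (@Rhausdorff R) h) /series /= big_nat_recr //=.
move=> le; apply: le_trans le; rewrite lerDr sumr_ge0 //.
Qed.

Lemma HS_exists f g m : (forall t, `|f t| <= g t) -> HS g m -> exists l, HS f l.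
Proof.
move=> fg h; apply/cvg_ex; apply: normed_cvg.
apply: (@series_le_cvg _ _ g).
- by move=> n /=.
- by move=> n; apply: le_trans (fg n).
- by move=> n; apply: fg.
- by apply/cvg_ex; exists m.
Qed.

Lemma HS_of_eseries f : (forall t, 0 <= f t) ->
  (\sum_(0 <= t <oo) (f t)%:E)%E = 1%:E -> HS f 1.
Proof.
move=> f0 e.
have nd : nondecreasing_seq (series f).
  by apply/nondecreasing_seqP => n; rewrite /series /= big_nat_recr //= lerDl.
have ub : has_ubound (range (series f)).
  exists 1 => _ [n _ <-].
  have := @nneseries_lim_ge R (fun t => (f t)%:E) xpredT 0 n (fun n _ _ => f0 n).
  by rewrite e /series /= sumEFin lee_fin.
have c := nondecreasing_is_cvgn nd ub.
have h : HS f (limn (series f)) by [].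
have := HS_eseries h; rewrite e => -[E]; by rewrite E.
Qed.
End HS.

Section Gen.
Variable R : realType.


Lemma ln_le_sub1 (v : R) : 0 < v -> ln v <= v - 1 /\ (ln v = v - 1 -> v = 1).
Proof.
move=> v0; have ev : expR (ln v) = v by rewrite lnK ?posrE.
have [e0|vn] := eqVneq (ln v) 0.
  have v1 : v = 1 by rewrite -ev e0 expR0.
  by split; [rewrite e0 v1 subrr | ].
have := expR_gt1Dx vn; rewrite ev => h.
split; first by rewrite -(lerD2l 1) addrCA subrr addr0; apply: ltW.
by move=> e; move: h; rewrite e addrCA subrr addr0 ltxx.
Qed.

Lemma le_sum1 (I : finType) (F : I -> R) i :
  (forall j, 0 <= F j) -> F i <= \sum_j F j.
Proof. by move=> h; rewrite (bigD1 i) //= lerDl sumr_ge0. Qed.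

Section transfer.
Variables (I : finType) (w : I -> R) (rho : I -> R).
Hypothesis wpos : forall i, 0 < w i.
Definition Nc (c : R) := \sum_j (rho j == c)%:R * w j.
Definition avg (f : I -> R) (c : R) := (\sum_j (rho j == c)%:R * w j * f j) / Nc c.

Lemma Nc_gt0 i : 0 < Nc (rho i).
Proof.
apply: (lt_le_trans (wpos i)); rewrite /Nc (bigD1 i) //= eqxx mul1r lerDl.
by apply: sumr_ge0 => j _; rewrite mulr_ge0 ?ler0n // ltW.
Qed.

Lemma transfer (f : I -> R) (H : R -> R) :
  \sum_i w i * avg f (rho i) * H (rho i) = \sum_i w i * f i * H (rho i).
Proof.
rewrite /avg.
transitivity (\sum_i \sum_j (rho i == rho j)%:R * w i * (w j * f j * H (rho j) / Nc (rho j))).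
  apply: eq_bigr => i _; rewrite big_distrl /= big_distrr /= big_distrl /=.
  apply: eq_bigr => j _; rewrite eq_sym; have [e|] := eqVneq (rho j) (rho i).
    by rewrite e /= mul1r; ring.
  by move=> _ /=; rewrite !mul0r mulr0 !mul0r.
rewrite exchange_big /=; apply: eq_bigr => j _.
rewrite -big_distrl /= (_ : \sum_i _ = Nc (rho j)); last first.
  by apply: eq_bigr => i _; rewrite /Nc.
have := Nc_gt0 j; set N := Nc _ => N0.
by rewrite mulrC -!mulrA mulVf ?mulr1 // gt_eqF.
Qed.
End transfer.
End Gen.

Section Main.
Variables (R : realType) (X Y : finType) (p : X -> Y -> R).
Hypothesis ppos : forall x y, 0 < p x y.

Definition chan' (k' : X -> Y -> nat -> R) :=
  (forall x y t, 0 <= k' x y t) /\ (forall x y, HS (k' x y) 1).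

Lemma chan_of k' : channel k' -> chan' k'.
Proof.
move=> h; split; first by move=> x y t; case: (h x y) => /(_ t).
by move=> x y; case: (h x y) => h1 h2; apply: HS_of_eseries.
Qed.

Lemma chan_to k' : chan' k' -> channel k'.
Proof. by case=> h1 h2 x y; split => //; rewrite (HS_eseries (h2 x y)). Qed.

Lemma push_HS k' w : chan' k' -> HS (push k' w) (\sum_x \sum_y w x y).
Proof.
case=> _ h; apply: HS_big => x; apply: HS_big => y.
have := HS_scale (c:=w x y) (h x y); rewrite mulr1.
by apply: HS_ext => t; rewrite mulrC.
Qed.

Lemma push_ge0 k' w t : chan' k' -> (forall x y, 0 <= w x y) -> 0 <= push k' w t.
Proof.
case=> h0 _ w0; apply: sumr_ge0 => x _; apply: sumr_ge0 => y _.
by rewrite mulr_ge0.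
Qed.

Lemma push_ge k' x y t : chan' k' -> p x y * k' x y t <= push k' p t.
Proof.
case=> h0 _; rewrite /push.
apply: le_trans (le_sum1 _ _); last first.
  by move=> j; apply: sumr_ge0 => i _; rewrite mulr_ge0 // ltW.
apply: le_trans (le_sum1 _ _); last by move=> j; rewrite mulr_ge0 // ltW.
by rewrite mulrC.
Qed.

Definition term k' x y t := k' x y t * ln (k' x y t / push k' p t).

Lemma term_bound k' x y t : chan' k' ->
  `|term k' x y t| <= (p x y)^-1 * k' x y t + push k' p t.
Proof.
move=> hc; have [h0 _] := hc; rewrite /term.
have A0 := push_ge0 t hc (fun x y => ltW (ppos x y)).
have [k0|kpos] := eqVneq (k' x y t) 0.
  by rewrite k0 mul0r normr0 mulr0 add0r.
have kp : 0 < k' x y t by rewrite lt_neqAle eq_sym kpos h0.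
have pA := push_ge x y t hc.
have Ap : 0 < push k' p t by apply: lt_le_trans pA; rewrite mulr_gt0.
have up : 0 < k' x y t / push k' p t by rewrite divr_gt0.
have pi : 0 < (p x y)^-1 by rewrite invr_gt0.
rewrite ler_norml; apply/andP; split.
  have ui : 0 < (k' x y t / push k' p t)^-1 by rewrite invr_gt0.
  have [h _] := ln_le_sub1 ui.
  rewrite lnV ?posrE // invf_div in h.
  have : k' x y t * (- ln (k' x y t / push k' p t)) <=
         k' x y t * (push k' p t / k' x y t - 1) by rewrite ler_pM2l.
  rewrite mulrBr mulr1 mulrCA divff ?mulr1 ?gt_eqF // mulrN.
  move=> hh; have : 0 <= (p x y)^-1 * k' x y t by rewrite mulr_ge0 // ltW.
  lra.
have l1 : ln (k' x y t / push k' p t) <= ln (p x y)^-1.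
  rewrite ler_ln ?posrE // ler_pdivrMr // mulrC ler_pdivlMr ?ppos //.
  by rewrite mulrC.
have [l2 _] := ln_le_sub1 pi.
apply: le_trans (_ : k' x y t * (p x y)^-1 <= _); last first.
  by rewrite (mulrC (p x y)^-1) lerDl.
rewrite ler_pM2l //; apply: (le_trans l1); apply: (le_trans l2).
by rewrite lerBlDr lerDl.
Qed.

Definition Lk k' x y : R := limn (fun n => (series (term k' x y) n : R)).

Lemma HS_term k' x y : chan' k' -> HS (term k' x y) (Lk k' x y).
Proof.
move=> hc; have [h0 h1] := hc.
have [l hl] : exists l, HS (term k' x y) l.
  apply: (HS_exists (fun t => term_bound x y t hc)).
  apply: HS_add; first exact: HS_scale (h1 x y).
  exact: push_HS.
by rewrite /Lk (cvg_lim (@Rhausdorff R) hl).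
Qed.

Lemma mutinf_k_real k' : chan' k' ->
  mutinf_k p k' = (\sum_x \sum_y p x y * Lk k' x y)%:E.
Proof.
move=> hc; rewrite /mutinf_k.
transitivity (\sum_x \sum_y ((p x y * Lk k' x y)%:E))%E.
  apply: eq_bigr => x _; apply: eq_bigr => y _.
  by rewrite /KLnat (HS_eseries (@HS_term k' x y hc)) EFinM.
rewrite (eq_bigr (fun x => (\sum_y p x y * Lk k' x y)%:E)); last first.
  by move=> x _; rewrite sumEFin.
by rewrite sumEFin.
Qed.

End Main.

Section Suff.
Variables (R : realType) (X Y : finType) (p : X -> Y -> R).
Hypothesis ppos : forall x y, 0 < p x y.

Lemma lnMp (x y : R) : 0 < x -> 0 < y -> ln (x * y) = ln x + ln y.
Proof. by move=> hx hy; apply: lnM; rewrite posrE. Qed.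
Lemma lnVp (x : R) : 0 < x -> ln x^-1 = - ln x.
Proof. by move=> hx; apply: lnV; rewrite posrE. Qed.
Lemma lnDivp (x y : R) : 0 < x -> 0 < y -> ln (x / y) = ln x - ln y.
Proof. by move=> hx hy; rewrite lnMp ?invr_gt0 // lnVp. Qed.

Lemma pairE (F : X -> Y -> R) : \sum_x \sum_y F x y = \sum_(u : X * Y) F u.1 u.2.
Proof. exact: pair_bigA. Qed.

Lemma q_gt0 x y : 0 < prodmarg p x y.
Proof.
have h1 : p x y <= pX p x by apply: le_sum1 => j; apply: ltW.
have h2 : p x y <= pY p y by apply: le_sum1 => j; apply: ltW.
rewrite /prodmarg mulr_gt0 //; apply: lt_le_trans (ppos x y) _ => //.
Qed.

Definition rr x y := p x y / prodmarg p x y.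

Lemma rr_gt0 x y : 0 < rr x y.
Proof. by rewrite divr_gt0 ?q_gt0. Qed.

Lemma p_rr x y : p x y / rr x y = prodmarg p x y.
Proof.
have := q_gt0 x y; have := ppos x y; rewrite /rr => h1 h2.
by field; rewrite ?gt_eqF.
Qed.

Lemma q_rr x y : prodmarg p x y * rr x y = p x y.
Proof.
have := q_gt0 x y; rewrite /rr => h2.
by field; rewrite ?gt_eqF.
Qed.

Lemma phi_ge0 (u : R) : 0 < u -> 0 <= ln u - 1 + u^-1 /\ (ln u - 1 + u^-1 = 0 -> u = 1).
Proof.
move=> u0; have ui : 0 < u^-1 by rewrite invr_gt0.
have [h1 h2] := ln_le_sub1 ui; rewrite lnV ?posrE // in h1 h2.
split; first lra.
move=> e; have : u^-1 = 1 by apply: h2; lra.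
by move/(congr1 (fun z => z^-1)); rewrite invrK invr1.
Qed.

Lemma push_pair (k : X -> Y -> nat -> R) w t :
  push k w t = \sum_(u : X * Y) k u.1 u.2 t * w u.1 u.2.
Proof. by rewrite /push pairE. Qed.

Lemma sufficiency k : chan' k -> iib_div p k = (mutinf p)%:E ->
  forall x y t, 0 < k x y t -> rr x y = push k p t / push k (prodmarg p) t.
Proof.
move=> hc hdiv.
have [k0 k1] := hc.
set a := push k p; set b := push k (prodmarg p).
set M := \sum_(u : X * Y) rr u.1 u.2.
set M' := \sum_(u : X * Y) (rr u.1 u.2)^-1.
have rM u : rr u.1 u.2 <= M by apply: (@le_sum1 R _ (fun u : X * Y => rr u.1 u.2)) => j; apply: ltW; apply: rr_gt0.
have rM' u : (rr u.1 u.2)^-1 <= M' by apply: (@le_sum1 R _ (fun u : X * Y => (rr u.1 u.2)^-1)) => j; rewrite invr_ge0 ltW // rr_gt0.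
have aMb t : a t <= M * b t.
  rewrite /a /b !push_pair big_distrr /=; apply: ler_sum => u _.
  rewrite -(q_rr u.1 u.2) mulrA [M * _]mulrC; apply: ler_wpM2l => //.
  by rewrite mulr_ge0 // ltW // q_gt0.
have bMa t : b t <= M' * a t.
  rewrite /a /b !push_pair big_distrr /=; apply: ler_sum => u _.
  rewrite -(p_rr u.1 u.2) mulrA [M' * _]mulrC; apply: ler_wpM2l => //.
  by rewrite mulr_ge0 // ltW.
have a0 t : 0 <= a t by apply: push_ge0 => // x y; apply: ltW.
have b0 t : 0 <= b t by apply: push_ge0 => // x y; apply: ltW; apply: q_gt0.
have bnd t : `|a t * ln (a t / b t)| <= (M + M') * a t.
  have [->|an] := eqVneq (a t) 0; first by rewrite mul0r normr0 mulr0.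
  have ap : 0 < a t by rewrite lt_neqAle eq_sym an a0.
  have bp : 0 < b t.
    rewrite lt_neqAle eq_sym b0 andbT; apply/eqP => e.
    by have := aMb t; rewrite e mulr0 leNgt ap.
  have up : 0 < a t / b t by rewrite divr_gt0.
  have [l1 _] := ln_le_sub1 up.
  have ui : 0 < (a t / b t)^-1 by rewrite invr_gt0.
  have [l2 _] := ln_le_sub1 ui; rewrite lnV ?posrE // invf_div in l2.
  have uM : a t / b t <= M by rewrite ler_pdivrMr // mulrC.
  have uM' : b t / a t <= M' by rewrite ler_pdivrMr // mulrC.
  rewrite normrM (ger0_norm (ltW ap)) mulrC ler_pM2r //.
  rewrite ler_norml; apply/andP; split; lra.
have [L hL] : exists L, HS (fun t => a t * ln (a t / b t)) L.
  apply: (HS_exists (g := fun t => (M + M') * a t)) => //.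
  exact: HS_scale (push_HS (w:=p) hc).
have LE : L = mutinf p.
  by move: hdiv; rewrite /iib_div /KLnat (HS_eseries hL) => -[].
have hS : HS (fun t => \sum_(u : X * Y) k u.1 u.2 t * (p u.1 u.2 * ln (rr u.1 u.2))) (mutinf p).
  have := HS_big (fun u : X * Y => HS_scale (c := p u.1 u.2 * ln (rr u.1 u.2)) (k1 u.1 u.2)).
  rewrite /mutinf pairE => h.
  apply: (HS_ext _ (HS_ext (fun t => erefl) _)); last first.
    by move: h; congr HS; apply: eq_bigr => u _; rewrite mulr1.
  by move=> t; apply: eq_bigr => u _; rewrite mulrC.
pose phi (u : X * Y) t := ln (rr u.1 u.2 * b t / a t) - 1 + (rr u.1 u.2 * b t / a t)^-1.
pose E' t := \sum_(u : X * Y) k u.1 u.2 t * p u.1 u.2 * phi u t.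
have kz t u : a t = 0 -> k u.1 u.2 t = 0.
  move=> e; apply/eqP; rewrite eq_le k0 andbT.
  have := push_ge ppos u.1 u.2 t hc; rewrite -/a e => h.
  by rewrite -(pmulr_rle0 _ (ppos u.1 u.2)).
have EE t : \sum_(u : X * Y) k u.1 u.2 t * (p u.1 u.2 * ln (rr u.1 u.2))
            - a t * ln (a t / b t) = E' t.
  have [e|an] := eqVneq (a t) 0.
    rewrite e mul0r subr0 /E' big1 ?big1 // => u _; rewrite kz // ?mul0r //.
  have ap : 0 < a t by rewrite lt_neqAle eq_sym an a0.
  have bp : 0 < b t.
    rewrite lt_neqAle eq_sym b0 andbT; apply/eqP => e.
    by have := aMb t; rewrite e mulr0 leNgt ap.
  have S : E' t = \sum_(u : X * Y) (k u.1 u.2 t * (p u.1 u.2 * ln (rr u.1 u.2))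
       + k u.1 u.2 t * p u.1 u.2 * (ln (b t) - ln (a t)) - k u.1 u.2 t * p u.1 u.2
       + k u.1 u.2 t * prodmarg p u.1 u.2 * (a t / b t)).
    apply: eq_bigr => u _; rewrite /phi.
    have rp := rr_gt0 u.1 u.2.
    have rbp : 0 < rr u.1 u.2 * b t by rewrite mulr_gt0.
    rewrite (lnDivp rbp ap) (lnMp rp bp) /rr (lnDivp (ppos _ _) (q_gt0 _ _)).
    rewrite -(p_rr u.1 u.2) /rr.
    have := ppos u.1 u.2 => pp; have := q_gt0 u.1 u.2 => qp.
    field; rewrite ?gt_eqF //.
  rewrite S !big_split /= sumrN -!big_distrl /= -!push_pair -/a -/b.
  rewrite lnDivp //.
  have : b t * (a t / b t) = a t by field; rewrite gt_eqF.
  rewrite mulrC => ->; ring.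
have ap_of t u : 0 < k u.1 u.2 t -> 0 < a t.
  move=> kp; apply: lt_le_trans (push_ge ppos u.1 u.2 t hc).
  by rewrite mulr_gt0.
have bp_of t : 0 < a t -> 0 < b t.
  move=> ap; rewrite lt_neqAle eq_sym b0 andbT; apply/eqP => e.
  by have := aMb t; rewrite e mulr0 leNgt ap.
have T0 t u : 0 <= k u.1 u.2 t * p u.1 u.2 * phi u t.
  have [e|kn] := eqVneq (k u.1 u.2 t) 0; first by rewrite e !mul0r.
  have kp : 0 < k u.1 u.2 t by rewrite lt_neqAle eq_sym kn k0.
  have ap := ap_of t u kp; have bp := bp_of t ap.
  have up : 0 < rr u.1 u.2 * b t / a t by apply: divr_gt0 => //; apply: mulr_gt0 => //; apply: rr_gt0.
  have [h _] := phi_ge0 up.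
  by rewrite mulr_ge0 // mulr_ge0 // ltW.
have hE' : HS E' 0.
  apply: (HS_ext EE); have := HS_sub hS hL; by rewrite LE subrr.
have E'0 t : E' t = 0.
  by apply: (HS_ge0_eq0 _ hE') => t'; apply: sumr_ge0 => u _; apply: T0.
move=> x y t kp.
have ap := ap_of t (x, y) kp; have bp := bp_of t ap.
have up : 0 < rr x y * b t / a t by apply: divr_gt0 => //; apply: mulr_gt0 => //; apply: rr_gt0.
have := psumr_eq0P (fun u _ => T0 t u) (E'0 t) (i := (x, y)) isT.
move=> /eqP; rewrite /= mulf_eq0 mulf_eq0 (gt_eqF kp) (gt_eqF (ppos x y)) /=.
move=> /eqP /(proj2 (phi_ge0 up)) e.
rewrite -[rr x y](_ : rr x y * b t / a t * a t / b t = rr x y); first by rewrite e mul1r.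
by field; rewrite !gt_eqF.
Qed.
End Suff.

Section Struct.
Variables (R : realType) (X Y : finType) (p : X -> Y -> R).
Hypothesis ppos : forall x y, 0 < p x y.
Variable k : X -> Y -> nat -> R.
Hypothesis hc : chan' k.

Let w (u : X * Y) := p u.1 u.2.
Let rho (u : X * Y) := rr p u.1 u.2.
Let wpos : forall u, 0 < w u. Proof. by move=> u; apply: ppos. Qed.

Definition kb x y t := avg w rho (fun u => k u.1 u.2 t) (rr p x y).

Lemma kb_lin x y t : kb x y t =
  \sum_(j : X * Y) ((rho j == rr p x y)%:R * w j / Nc w rho (rr p x y)) * k j.1 j.2 t.
Proof. by rewrite /kb /avg big_distrl /=; apply: eq_bigr => j _; ring. Qed.

Lemma Nxy x y : 0 < Nc w rho (rr p x y).
Proof. exact: (Nc_gt0 rho wpos (x, y)). Qed.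

Lemma kb0 x y t : 0 <= kb x y t.
Proof.
have [k0 _] := hc; rewrite kb_lin; apply: sumr_ge0 => j _.
by rewrite mulr_ge0 // divr_ge0 ?mulr_ge0 ?ler0n ?ltW ?wpos ?Nxy.
Qed.

Lemma kb_HS x y : HS (kb x y) 1.
Proof.
have [_ k1] := hc.
have h := HS_big (fun j : X * Y => HS_scale
   (c := (rho j == rr p x y)%:R * w j / Nc w rho (rr p x y)) (k1 j.1 j.2)).
have e : \sum_(j : X * Y) (rho j == rr p x y)%:R * w j / Nc w rho (rr p x y) * 1 = 1.
  under eq_bigr do rewrite mulr1.
  by rewrite -big_distrl /= -/(Nc w rho (rr p x y)) divff // gt_eqF // Nxy.
rewrite e in h; apply: HS_ext h => t; by rewrite kb_lin.
Qed.

Lemma kb_chan : chan' kb.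
Proof. by split; [exact: kb0 | exact: kb_HS]. Qed.

Lemma kb_push_p t : push kb p t = push k p t.
Proof.
rewrite !push_pair.
have := transfer rho wpos (fun u => k u.1 u.2 t) (fun _ => 1).
under eq_bigr do rewrite mulr1.
under [in X in _ = X -> _]eq_bigr do rewrite mulr1.
move=> e; transitivity (\sum_(i : X * Y) w i * avg w rho (fun u => k u.1 u.2 t) (rho i)).
  by apply: eq_bigr => u _; rewrite mulrC.
by rewrite e; apply: eq_bigr => u _; rewrite mulrC.
Qed.

Lemma kb_push_q t : push kb (prodmarg p) t = push k (prodmarg p) t.
Proof.
rewrite !push_pair.
have := transfer rho wpos (fun u => k u.1 u.2 t) (fun c => c^-1).
move=> e; transitivity (\sum_(i : X * Y) w i * avg w rho (fun u => k u.1 u.2 t) (rho i) * (rho i)^-1).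
  apply: eq_bigr => u _; rewrite -(p_rr ppos) /w /rho /kb; ring.
by rewrite e; apply: eq_bigr => u _; rewrite -(p_rr ppos) /w /rho; ring.
Qed.

Lemma kb_gt0 x y t : 0 < k x y t -> 0 < kb x y t.
Proof.
move=> kp; have [k0 _] := hc; rewrite kb_lin.
apply: lt_le_trans (@le_sum1 R _ (fun j : X * Y => (rho j == rr p x y)%:R * w j / Nc w rho (rr p x y) * k j.1 j.2 t) (x, y) _).
  by rewrite /rho /= eqxx mul1r mulr_gt0 // divr_gt0 ?wpos ?Nxy.
by move=> j; rewrite mulr_ge0 // divr_ge0 ?mulr_ge0 ?ler0n ?ltW ?wpos ?Nxy.
Qed.

Lemma psi_ge0 (kk kv a : R) : 0 <= kk -> 0 <= kv -> (0 < kk -> 0 < kv /\ 0 < a) ->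
  0 <= kk * ln (kk / a) - kk * ln (kv / a) - kk + kv /\
  (kk * ln (kk / a) - kk * ln (kv / a) - kk + kv = 0 -> kk = kv).
Proof.
move=> k0 v0 h.
have [->|kn] := eqVneq kk 0.
  by rewrite !mul0r !subrr add0r; split => // ->.
have kp : 0 < kk by rewrite lt_neqAle eq_sym kn k0.
have [vp ap] := h kp.
have e : kk * ln (kk / a) - kk * ln (kv / a) = - (kk * ln (kv / kk)).
  by rewrite !lnDivp //; ring.
rewrite e.
have q0 : 0 < kv / kk by rewrite divr_gt0.
have [l1 l2] := ln_le_sub1 q0.
have m : kk * ln (kv / kk) <= kk * (kv / kk - 1) by rewrite ler_pM2l.
have kk1 : kk * (kv / kk - 1) = kv - kk by field; rewrite gt_eqF.
rewrite kk1 in m; split; first lra.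
move=> z; have : kk * ln (kv / kk) = kk * (kv / kk - 1) by rewrite kk1; lra.
move/(mulfI kn)/l2 => /(congr1 (fun z => z * kk)).
by rewrite mul1r divfK ?gt_eqF.
Qed.

Hypothesis opt : forall k', channel k' -> iib_div p k' = iib_div p k ->
  (mutinf_k p k <= mutinf_k p k')%E.

Lemma k_eq_kb x y t : k x y t = kb x y t.
Proof.
have hcb := kb_chan.
have [k0 k1] := hc.
have le : \sum_x \sum_y p x y * Lk p k x y <= \sum_x \sum_y p x y * Lk p kb x y.
  have e : iib_div p kb = iib_div p k.
    rewrite /iib_div; congr KLnat; apply/funext => t'; [exact: kb_push_p | exact: kb_push_q].
  by have := opt (chan_to hcb) e; rewrite !(mutinf_k_real ppos) // lee_fin.
set A := push k p.
have pk : push kb p = A by apply/funext => t'; apply: kb_push_p.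
pose psi (u : X * Y) t := k u.1 u.2 t * ln (k u.1 u.2 t / A t)
   - k u.1 u.2 t * ln (kb u.1 u.2 t / A t) - k u.1 u.2 t + kb u.1 u.2 t.
pose D t := \sum_(u : X * Y) w u * psi u t.
have hD : HS D (\sum_x \sum_y p x y * Lk p k x y - \sum_x \sum_y p x y * Lk p kb x y).
  rewrite !pairE.
  have h1 := HS_big (fun u : X * Y => HS_scale (c := w u) (HS_term ppos (x := u.1) (y := u.2) hc)).
  have h2 := HS_big (fun u : X * Y => HS_scale (c := w u) (HS_term ppos (x := u.1) (y := u.2) hcb)).
  apply: (HS_ext _ (HS_sub h1 h2)) => t'.
  rewrite /D /psi /term pk -/A.
  have T1 := transfer rho wpos (fun u => k u.1 u.2 t') (fun c => ln (avg w rho (fun u => k u.1 u.2 t') c / A t')).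
  have T2 := transfer rho wpos (fun u => k u.1 u.2 t') (fun _ => 1).
  have E2 : \sum_(u : X * Y) w u * (kb u.1 u.2 t' * ln (kb u.1 u.2 t' / A t'))
          = \sum_(u : X * Y) w u * (k u.1 u.2 t' * ln (kb u.1 u.2 t' / A t')).
    rewrite (eq_bigr _ (fun u _ => mulrA _ _ _)) T1.
    by apply: eq_bigr => u _; rewrite mulrA.
  have E3 : \sum_(u : X * Y) w u * kb u.1 u.2 t' = \sum_(u : X * Y) w u * k u.1 u.2 t'.
    by move: T2; under eq_bigr do rewrite mulr1; under [in X in _ = X -> _]eq_bigr do rewrite mulr1.
  rewrite E2 [in RHS](eq_bigr (fun u => w u * (k u.1 u.2 t' * ln (k u.1 u.2 t' / A t'))
     - w u * (k u.1 u.2 t' * ln (kb u.1 u.2 t' / A t')) - w u * k u.1 u.2 t' + w u * kb u.1 u.2 t')); last first.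
    by move=> u _; ring.
  rewrite !big_split /= !sumrN E3; ring.
have Apos u t' : 0 < k u.1 u.2 t' -> 0 < A t'.
  move=> kp; apply: lt_le_trans (push_ge ppos u.1 u.2 t' hc).
  by rewrite mulr_gt0.
have psiP u t' := psi_ge0 (k0 u.1 u.2 t') (kb0 u.1 u.2 t')
   (fun kp => conj (kb_gt0 kp) (Apos u t' kp)).
have D0 t' : 0 <= D t'.
  apply: sumr_ge0 => u _; apply: mulr_ge0; [exact: ltW (wpos u) | by case: (psiP u t')].
have L0 := HS_le (@HS_cst0 R) hD D0.
have LZ : \sum_x \sum_y p x y * Lk p k x y - \sum_x \sum_y p x y * Lk p kb x y = 0.
  by apply/eqP; rewrite eq_le L0 andbT subr_le0.
rewrite LZ in hD.
have := HS_ge0_eq0 D0 hD t.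
move/(psumr_eq0P (fun u _ => mulr_ge0 (ltW (wpos u)) (proj1 (psiP u t))) )=> /(_ (x, y) isT).
move/eqP; rewrite mulf_eq0 (gt_eqF (wpos _)) /= => /eqP.
by case: (psiP (x, y) t) => _ /[apply].
Qed.
End Struct.

Unset Implicit Arguments.
Set Strict Implicit.

Theorem theorem2 (R : realType) (X Y : finType) (p : X -> Y -> R)
  (k : X -> Y -> nat -> R) :
  fully_supported_distr p ->
  (forall y : Y, pY p y = #|Y|%:R^-1) ->
  IIB_solution p (mutinf p) k ->
  forall (s : {perm X}) (tau : {perm Y}),
    equivariance p s tau <-> (forall x y t, k (s x) (tau y) t = k x y t).
Proof.
move=> [ppos psum] hY [hch hdiv hopt] s tau.
have hc := chan_of hch.
have opt : forall k', channel k' -> iib_div p k' = iib_div p k ->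
    (mutinf_k p k <= mutinf_k p k')%E.
  by move=> k' ck' e; apply: hopt => //; rewrite e.
have pXg x (y : Y) : 0 < pX p x.
  have h := @le_sum1 R _ (fun y => p x y) y (fun j => ltW (ppos x j)).
  exact: lt_le_trans (ppos x y) h.
have pYg (x : X) y : 0 < pY p y.
  have h := @le_sum1 R _ (fun x => p x y) x (fun j => ltW (ppos j y)).
  exact: lt_le_trans (ppos x y) h.
have rrE (x : X) (y : Y) : rr p x y = pcond p x y / #|Y|%:R^-1.
  rewrite -(hY y) /rr /pcond /prodmarg.
  have := pXg x y; have := pYg x y => h1 h2.
  by field; rewrite !gt_eqF.
have rr_iff (x : X) (y : Y) (x' : X) (y' : Y) : rr p x y = rr p x' y' <-> pcond p x y = pcond p x' y'.
  have cne : #|Y|%:R^-1 != 0 :> R by rewrite -(hY y) gt_eqF // (pYg x y).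
  rewrite !rrE; split; last by move=> ->.
  by move/(congr1 (fun z => z * #|Y|%:R^-1)); rewrite !divfK.
have equivE : equivariance p s tau <-> forall x y, pcond p (s x) (tau y) = pcond p x y.
  split => h x y; first by rewrite h permK.
  by rewrite -{1}(permKV tau y) h.
rewrite equivE; split.
  move=> h x y t; rewrite (k_eq_kb ppos hc opt) (k_eq_kb ppos hc opt x y t) /kb.
  by rewrite (proj2 (rr_iff _ _ _ _) (h x y)).
move=> h x y; apply/rr_iff.
have [t kt] : exists t, 0 < k x y t.
  case: (pselect (exists t, 0 < k x y t)) => // nt; exfalso.
  have [k0 k1] := hc.
  have z t : k x y t = 0.
    apply/eqP; rewrite eq_le k0 andbT leNgt; apply/negP => kt; apply: nt; by exists t.
  have h0 : HS (fun _ : nat => 0 : R) 0 := @HS_cst0 R.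
  have := HS_unique (k1 x y) (HS_ext (fun t => esym (z t)) h0).
  by move/eqP; rewrite oner_eq0.
rewrite (sufficiency ppos hc hdiv kt) (sufficiency ppos hc hdiv (t := t) (x := s x) (y := tau y)) //.
by rewrite h.
Qed.
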